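(* Let $n=p^{\alpha}q^{\beta}$ where $p,q$ are distinct primes and $\alpha,\beta\geq 1$ are integers. Then the complement graph $\mathbb{AG}^c(\mathbb{Z}_n)$ of $\mathbb{AG}(\mathbb{Z}_n)$ has no induced cycle of odd length greater than $3$.
   Context: For a commutative ring $R$ with unity, the annihilating-ideal graph $\mathbb{AG}(R)$ is the simple graph whose vertex set is the set of all non-zero ideals of $R$ with non-zero annihilator, two distinct vertices $I,J$ being adjacent if and only if $IJ=0$. $\mathbb{AG}^c(R)$ denotes its complement (same vertex set, two distinct vertices adjacent iff they are not adjacent in $\mathbb{AG}(R)$). An induced cycle is an induced subgraph isomorphic to a cycle. *)

(* Defs.v *)
From mathcomp Require Import all_boot all_order all_algebra.
Set Implicit Arguments. Unset Strict Implicit. Unset Printing Implicit Defensive.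
Import GRing.Theory.
Local Open Scope ring_scope.

Definition is_ideal (R : finComNzRingType) (I : {set R}) : bool :=
  [&& (0 \in I),
      [forall x in I, forall y in I, x - y \in I] &
      [forall r : R, forall x in I, r * x \in I]].

(* The ideal product IJ (the ideal generated by all x*y, x in I, y in J)
   is zero iff every such product x*y is zero. *)
Definition ideal_prod_zero (R : finComNzRingType) (I J : {set R}) : bool :=
  [forall x in I, forall y in J, x * y == 0].

Definition ann_nonzero (R : finComNzRingType) (I : {set R}) : bool :=
  [exists r : R, (r != 0) && [forall x in I, r * x == 0]].

Definition AG_vertex (R : finComNzRingType) (I : {set R}) : bool :=
  [&& is_ideal I, I != [set 0] & ann_nonzero I].

Definition AG_adj (R : finComNzRingType) (I J : {set R}) : bool :=
  (I != J) && ideal_prod_zero I J.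

Definition AGc_adj (R : finComNzRingType) (I J : {set R}) : bool :=
  (I != J) && ~~ AG_adj I J.

Definition cycle_adj (k : nat) (i j : 'I_k) : bool :=
  (j == (i.+1 %% k)%N :> nat) || (i == (j.+1 %% k)%N :> nat).

Definition has_induced_cycle (T : finType) (V : pred T) (e : rel T) (k : nat)
  : Prop :=
  exists f : 'I_k -> T,
    [/\ injective f, (forall i, V (f i)) &
        (forall i j, e (f i) (f j) = cycle_adj i j)].

(* Main.v *)
Require Import Defs.
From mathcomp Require Import all_boot all_order all_algebra.
From mathcomp Require Import zify.

Section Aux.

Variable P : nat.
Let gl z := gcdn z P.

Lemma key a c : (P %| a * c) = (P %| gl a * c).
Proof.
apply/idP/idP => H.
  have : P %| gcdn (a * c) (P * c) by rewrite dvdn_gcd H dvdn_mulr.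
  by rewrite -muln_gcdl.
by apply: dvdn_trans H _; apply: dvdn_mul => //; apply: dvdn_gcdl.
Qed.

Lemma mono a b c : gl a %| gl b -> P %| a * c -> P %| b * c.
Proof. by move=> H; rewrite key (key b) => H2; apply: dvdn_trans H2 (dvdn_mul H _). Qed.

Arguments mono {a b c}.

Lemma core a b c d : ~~ (P %| a * b) -> ~~ (P %| c * d) ->
  gl a %| gl c -> gl a %| gl d ->
  [/\ ~~ (P %| a * b), ~~ (P %| a * c) & ~~ (P %| a * d)].
Proof.
move=> H1 H2 Hc Hd; split => //; apply/negP => H.
  by move: H2; rewrite mulnC (mono Hd H).
by move: H2; rewrite (mono Hc) // mulnC.
Qed.

Arguments core {a b c d}.
Hypothesis tot : forall u v, gl u %| gl v \/ gl v %| gl u.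

Lemma min4 a b c d : ~~ (P %| a * b) -> ~~ (P %| c * d) ->
  [\/ [/\ ~~ (P %| a * b), ~~ (P %| a * c) & ~~ (P %| a * d)],
      [/\ ~~ (P %| b * a), ~~ (P %| b * c) & ~~ (P %| b * d)],
      [/\ ~~ (P %| c * a), ~~ (P %| c * b) & ~~ (P %| c * d)] |
      [/\ ~~ (P %| d * a), ~~ (P %| d * b) & ~~ (P %| d * c)]].
Proof.
move=> H1 H2.
have H1' : ~~ (P %| b * a) by rewrite mulnC.
have H2' : ~~ (P %| d * c) by rewrite mulnC.
have T := dvdn_trans.
case: (tot a b) => Hab; case: (tot c d) => Hcd.
- case: (tot a c) => H.
    by apply: Or41; apply: (core H1 H2 H (T _ _ _ H Hcd)).
  by apply: Or43; case: (core H2 H1 H (T _ _ _ H Hab)).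
- case: (tot a d) => H.
    by apply: Or41; apply: (core H1 H2 (T _ _ _ H Hcd) H).
  by apply: Or44; case: (core H2' H1 H (T _ _ _ H Hab)).
- case: (tot b c) => H.
    by apply: Or42; apply: (core H1' H2 H (T _ _ _ H Hcd)).
  by apply: Or43; case: (core H2 H1 (T _ _ _ H Hab) H).
- case: (tot b d) => H.
    by apply: Or42; apply: (core H1' H2 (T _ _ _ H Hcd) H).
  by apply: Or44; case: (core H2' H1 (T _ _ _ H Hab) H).
Qed.

End Aux.

Arguments min4 {P} tot {a b c d}.

Lemma tot_p p al : prime p -> forall u v,
  gcdn u (p ^ al) %| gcdn v (p ^ al) \/ gcdn v (p ^ al) %| gcdn u (p ^ al).
Proof.
move=> pp u v.
case/(dvdn_pfactor _ _ pp): (dvdn_gcdr u (p ^ al)) => m1 _ ->.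
case/(dvdn_pfactor _ _ pp): (dvdn_gcdr v (p ^ al)) => m2 _ ->.
case: (leqP m1 m2) => h; [left | right]; apply: dvdn_exp2l => //; exact: ltnW.
Qed.

Lemma sm k o : (o < k)%N -> o.+1 %% k = if o.+1 == k then 0 else o.+1.
Proof.
move=> ok; case: eqP => [->|ne]; first by rewrite modnn.
by rewrite modn_small //; lia.
Qed.

Lemma deg2 k (m o1 o2 o3 : 'I_k) : cycle_adj m o1 -> cycle_adj m o2 -> cycle_adj m o3 ->
  o1 != o2 -> o1 != o3 -> o2 != o3 -> False.
Proof.
have inj2 : forall a b : 'I_k, a.+1 %% k = b.+1 %% k -> a = b.
  move=> a b; rewrite (sm _ _ (ltn_ord a)) (sm _ _ (ltn_ord b)) => h; apply: val_inj => /=.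
  move: h; have := ltn_ord a; have := ltn_ord b.
  case: eqP; case: eqP => /= *; lia.
rewrite /cycle_adj => /orP [] /eqP h1 /orP [] /eqP h2 /orP [] /eqP h3;
  move=> n12 n13 n23;
  first [ by move: n12; rewrite (_ : o1 = o2) ?eqxx //; apply: val_inj; rewrite /= h1 h2
        | by move: n13; rewrite (_ : o1 = o3) ?eqxx //; apply: val_inj; rewrite /= ?h1 ?h3
        | by move: n23; rewrite (_ : o2 = o3) ?eqxx //; apply: val_inj; rewrite /= ?h2 ?h3
        | by move: n12; rewrite (inj2 o1 o2) ?eqxx // -h1 -h2
        | by move: n13; rewrite (inj2 o1 o3) ?eqxx // -h1 -h3
        | by move: n23; rewrite (inj2 o2 o3) ?eqxx // -h2 -h3 ].
Qed.

Definition Ty n (M : nat) (A B : {set 'Z_n}) :=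
  exists x y : 'Z_n, [/\ x \in A, y \in B & ~~ (M %| x * y)].

Arguments Ty {n}.
Lemma mulZ0 N (x y : 'Z_N) : (1 < N)%N -> ((x * y)%R == 0%R) = (N %| x * y).
Proof. move=> N1; rewrite -val_eqE /=; move: (nat_of_ord x) (nat_of_ord y) => a b. by rewrite Zp_cast. Qed.

Lemma edge_split N P Q (A B : {set 'Z_N}) : coprime P Q -> N = P * Q -> (1 < N)%N ->
  AGc_adj A B -> Ty P A B \/ Ty Q A B.
Proof.
move=> cPQ eN N1 /andP [AB]; rewrite /AG_adj AB /=.
case/forall_inPn => x xA /forall_inPn [y yB]; have e : forall m, (N %| m) = (P %| m) && (Q %| m) by move=> m; rewrite eN Gauss_dvd.
rewrite mulZ0 // e negb_and.
by case/orP => h; [left|right]; exists x, y.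
Qed.

Lemma ty_adj N M (A B : {set 'Z_N}) : M %| N -> (1 < N)%N -> Ty M A B -> A != B ->
  AGc_adj A B.
Proof.
move=> MN N1 [x [y [xA yB h]]] AB; rewrite /AGc_adj /AG_adj AB /=.
apply/forall_inPn; exists x => //; apply/forall_inPn; exists y => //.
rewrite mulZ0 //; apply/negP => H; move/negP: h; apply; exact: dvdn_trans MN H.
Qed.

Ltac dis := try rewrite -val_eqE /=; first [assumption | rewrite eq_sym; assumption].

Lemma four N M k (f : 'I_k -> {set 'Z_N}) :
  (forall u v, gcdn u M %| gcdn v M \/ gcdn v M %| gcdn u M) ->
  M %| N -> (1 < N)%N -> injective f ->
  (forall i j, AGc_adj (f i) (f j) = cycle_adj i j) ->
  forall a b c d : 'I_k,
  (a : nat) != b -> (a : nat) != c -> (a : nat) != d ->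
  (b : nat) != c -> (b : nat) != d -> (c : nat) != d ->
  Ty M (f a) (f b) -> Ty M (f c) (f d) -> False.
Proof.
move=> tot MN N1 inj hf a b c d ab ac ad bc bd cd.
have adj : forall u v : 'I_k, (u : nat) != v -> Ty M (f u) (f v) -> cycle_adj u v.
  move=> u v uv t; rewrite -hf; apply: (@ty_adj N M) => //.
  by apply/negP => /eqP /inj E; move: uv; rewrite E eqxx.
have ne : forall u v : 'I_k, (u : nat) != v -> u != v.
  by move=> u v; rewrite -val_eqE.
have sy : forall u v : nat, u != v -> v != u by move=> u v; rewrite eq_sym.
move=> [x1 [y1 [x1A y1B h1]]] [x2 [y2 [x2C y2D h2]]].
case: (min4 tot h1 h2) => [[e1 e2 e3]|[e1 e2 e3]|[e1 e2 e3]|[e1 e2 e3]].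
- apply: (@deg2 k a b c d); try dis;
  apply: adj; try dis; by [exists x1, y1 | exists x1, x2 | exists x1, y2].
- apply: (@deg2 k b a c d); try dis;
  apply: adj; try dis; by [exists y1, x1 | exists y1, x2 | exists y1, y2].
- apply: (@deg2 k c a b d); try dis;
  apply: adj; try dis; by [exists x2, x1 | exists x2, y1 | exists x2, y2].
- apply: (@deg2 k d a b c); try dis;
  apply: adj; try dis; by [exists y2, x1 | exists y2, y1 | exists y2, x2].
Qed.

Theorem lemma7 (p q alpha beta : nat) :
  prime p -> prime q -> p != q -> (0 < alpha)%N -> (0 < beta)%N ->
  forall k : nat, odd k -> (3 < k)%N ->
    ~ has_induced_cycle (@AG_vertex 'Z_(p ^ alpha * q ^ beta))
                        (@AGc_adj 'Z_(p ^ alpha * q ^ beta)) k.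
Proof.
move=> pp pq npq a0 b0 k ok k3 [f [inj _ hf]].
set N := p ^ alpha * q ^ beta.
have k5 : (4 < k)%N.
  by rewrite ltn_neqAle k3 andbT; apply/eqP => E; move: ok; rewrite -E.
have N1 : (1 < N)%N.
  have := prime_gt1 pp; have := prime_gt1 pq => h1 h2.
  rewrite /N; apply: (@leq_trans (p ^ alpha)); first by rewrite -{1}(expn0 p) ltn_exp2l.
  by rewrite leq_pmulr // expn_gt0 ltnW.
have cPQ : coprime (p ^ alpha) (q ^ beta).
  by apply: coprimeXl; apply: coprimeXr; rewrite prime_coprime // dvdn_prime2.
have F1 := @four N (p ^ alpha) k f (@tot_p p alpha pp) (dvdn_mulr _ (dvdnn _)) N1 inj hf.
have F2 := @four N (q ^ beta) k f (@tot_p q beta pq) (dvdn_mull _ (dvdnn _)) N1 inj hf.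
have kp : (0 < k)%N by apply: leq_trans k5.
pose o0 := Ordinal (leq_trans (isT : 0 < 5)%N k5).
pose o1 := Ordinal (leq_trans (isT : 1 < 5)%N k5).
pose o2 := Ordinal (leq_trans (isT : 2 < 5)%N k5).
pose o3 := Ordinal (leq_trans (isT : 3 < 5)%N k5).
pose o4 := Ordinal k5.
pose s4 := Ordinal (ltn_pmod 5 kp).
have h5 : 5 %% k = 0 \/ 5 %% k = 5.
  case: (ltngtP k 5) => h; first by lia.
    by right; rewrite modn_small.
  by left; rewrite h.
have ES : forall i j, cycle_adj i j -> Ty (p ^ alpha) (f i) (f j) \/ Ty (q ^ beta) (f i) (f j).
  by move=> i j; rewrite -hf; apply: edge_split.
have e0 : Ty (p ^ alpha) (f o0) (f o1) \/ Ty (q ^ beta) (f o0) (f o1).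
  by apply: ES; rewrite /cycle_adj /= modn_small ?eqxx //; lia.
have e1 : Ty (p ^ alpha) (f o1) (f o2) \/ Ty (q ^ beta) (f o1) (f o2).
  by apply: ES; rewrite /cycle_adj /= modn_small ?eqxx //; lia.
have e2 : Ty (p ^ alpha) (f o2) (f o3) \/ Ty (q ^ beta) (f o2) (f o3).
  by apply: ES; rewrite /cycle_adj /= modn_small ?eqxx //; lia.
have e3 : Ty (p ^ alpha) (f o3) (f o4) \/ Ty (q ^ beta) (f o3) (f o4).
  by apply: ES; rewrite /cycle_adj /= modn_small ?eqxx //; lia.
have e4 : Ty (p ^ alpha) (f o4) (f s4) \/ Ty (q ^ beta) (f o4) (f s4).
  by apply: ES; rewrite /cycle_adj /= eqxx.
case: e0 => h0; case: e1 => h1; case: e2 => h2; case: e3 => h3; case: e4 => h4;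
  first [ by apply: (F1 o0 o1 o2 o3)
        | by apply: (F1 o0 o1 o3 o4)
        | by apply: (F1 o1 o2 o3 o4)
        | by apply: (F1 o1 o2 o4 s4) => //=; case: h5 => E; rewrite ?E
        | by apply: (F1 o2 o3 o4 s4) => //=; case: h5 => E; rewrite ?E
        | by apply: (F2 o0 o1 o2 o3)
        | by apply: (F2 o0 o1 o3 o4)
        | by apply: (F2 o1 o2 o3 o4)
        | by apply: (F2 o1 o2 o4 s4) => //=; case: h5 => E; rewrite ?E
        | by apply: (F2 o2 o3 o4 s4) => //=; case: h5 => E; rewrite ?E ].
Qed.
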